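(* Let $\mathcal{I}=(R,U,C,\omega)$ be an instance of Valued APEP$\langle \mathsf{BoD}_\forall,\mathsf{BoD}_\exists,\mathsf{SoD}_\exists,\mathsf{SoD}_\forall,\mathsf{Card}_{UB},\mathsf{Card}_{LB}\rangle$ with $k=|R|$, and let $\tau=\max_{(r,\ge,t)\in C}t$. Then $C$ is $3\tau k\binom{k}{2}$-wbounded. Moreover, for any complete authorization relation $A$ there exists a complete authorization relation $A^*\subseteq A$ such that $A^*$ has at most $3\tau\binom{k}{2}$ users (i.e. $|\{u:A^*(u)\neq\emptyset\}|\le 3\tau\binom{k}{2}$) and $w_C(A^* )\le w_C(A)$.
   Context: $U$ is a finite set of users, $R$ a finite set of resources; authorization relation $A\subseteq U\times R$, $A(r)=\{u:(u,r)\in A\}$, $A(u)=\{r:(u,r)\in A\}$; $A$ is complete if $A(r)\ne\emptyset$ for all $r$. A weighted constraint is $w_c:2^{U\times R}\to\mathbb{N}$; $w_C(A)=\sum_{c\in C}w_c(A)$. A Valued APEP instance $(R,U,C,\omega)$ has $\omega:U\times 2^R\to\mathbb{N}$ monotone in the second argument. For each constraint $c$, $f_c:\mathbb{Z}\to\mathbb{N}$ is nondecreasing with $f_c(z)=0$ iff $z\le 0$, and $\ell_c>0$ is a constant; $\mathrm{maxdiff}(A,r,r')=\max\{|A(r)\setminus A(r')|,|A(r')\setminus A(r)|\}$. The constraint types are: $\mathsf{Card}_{UB}$ $(r,\le,t)$ with $w_c(A)=f_c(|A(r)|-t)$; $\mathsf{Card}_{LB}$ $(r,\ge,t)$ with $w_c(A)=f_c(t-|A(r)|)$;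 $\mathsf{SoD}_\forall$ $(r,r',\updownarrow,\forall)$ with $w_c(A)=f_c(|A(r)\cap A(r')|)$; $\mathsf{BoD}_\forall$ $(r,r',\leftrightarrow,\forall)$ with $w_c(A)=f_c(\mathrm{maxdiff}(A,r,r'))$; $\mathsf{SoD}_\exists$ $(r,r',\updownarrow,\exists)$ with $w_c(A)=0$ if $A(r)\neq A(r')$ and $\ell_c$ otherwise; $\mathsf{BoD}_\exists$ $(r,r',\leftrightarrow,\exists)$ with $w_c(A)=0$ if $A(r)\cap A(r')\ne\emptyset$ and $\ell_c$ otherwise. Valued APEP$\langle X\rangle$ denotes instances all of whose constraints have types in $X$. $C$ is $t$-wbounded if for every complete $A$ with $|A|>t$ there is a complete $A'\subseteq A$ with $|A'|<|A|$ and $w_C(A')\le w_C(A)$. *)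

(* Defs.v *)
From Stdlib Require Lists.List.
From mathcomp Require Import all_boot all_order all_algebra.
Set Implicit Arguments. Unset Strict Implicit. Unset Printing Implicit Defensive.
Import Order.TTheory GRing.Theory Num.Theory.

Section APEP.
Variables (U R : finType).

Definition authR := {set U * R}.

Definition usersOf (A : authR) (r : R) : {set U} := [set u | (u, r) \in A].
Definition resOf (A : authR) (u : U) : {set R} := [set r | (u, r) \in A].

Definition complete (A : authR) : Prop := forall r : R, usersOf A r != set0.

Definition maxdiff (A : authR) (r r' : R) : nat :=
  maxn #|usersOf A r :\: usersOf A r'| #|usersOf A r' :\: usersOf A r|.

Inductive constr : Type :=
| CardUB of R & nat & (int -> nat)
| CardLB of R & nat & (int -> nat)
| SoDAll of R & R & (int -> nat)
| BoDAll of R & R & (int -> nat)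
| SoDEx of R & R & nat
| BoDEx of R & R & nat.

Definition wc (c : constr) (A : authR) : nat :=
  match c with
  | CardUB r t f => f (Posz #|usersOf A r| - Posz t)%R
  | CardLB r t f => f (Posz t - Posz #|usersOf A r|)%R
  | SoDAll r r' f => f (Posz #|usersOf A r :&: usersOf A r'|)
  | BoDAll r r' f => f (Posz (maxdiff A r r'))
  | SoDEx r r' l => if usersOf A r != usersOf A r' then 0 else l
  | BoDEx r r' l => if usersOf A r :&: usersOf A r' != set0 then 0 else l
  end.

Definition wC (C : seq constr) (A : authR) : nat := \sum_(c <- C) wc c A.

Definition good_f (f : int -> nat) : Prop :=
  (forall x y : int, (x <= y)%R -> f x <= f y) /\
  (forall z : int, f z = 0 <-> (z <= 0)%R).

Definition valid_constr (c : constr) : Prop :=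
  match c with
  | CardUB _ _ f | CardLB _ _ f | SoDAll _ _ f | BoDAll _ _ f => good_f f
  | SoDEx _ _ l | BoDEx _ _ l => 0 < l
  end.

Definition valid_constrs (C : seq constr) : Prop :=
  forall c, Stdlib.Lists.List.In c C -> valid_constr c.

Definition lb_threshold (c : constr) : nat :=
  match c with CardLB _ t _ => t | _ => 0 end.

(* tau = max_{(r,>=,t) in C} t  (0 if C has no Card_LB constraint) *)
Definition tau (C : seq constr) : nat := \max_(c <- C) lb_threshold c.

Definition wbounded (C : seq constr) (t : nat) : Prop :=
  forall A : authR, complete A -> t < #|A| ->
    exists A' : authR, [/\ A' \subset A, complete A', #|A'| < #|A| &
                           wC C A' <= wC C A].

Definition nusers (A : authR) : nat := #|[set u | resOf A u != set0]|.

Definition monotone_omega (omega : U -> {set R} -> nat) : Prop :=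
  forall u (X Y : {set R}), X \subset Y -> omega u X <= omega u Y.

End APEP.

(* Main.v *)
Require Import Defs.
From mathcomp Require Import all_boot all_order all_algebra.
From mathcomp Require Import zify.
Set Implicit Arguments. Unset Strict Implicit. Unset Printing Implicit Defensive.
Import Order.TTheory GRing.Theory Num.Theory.

Lemma card_bigcup_le (I T : finType) (P : pred I) (F : I -> {set T}) :
  #|\bigcup_(i | P i) F i| <= \sum_(i | P i) #|F i|.
Proof.
apply: (big_rec2 (fun (S : {set T}) n => #|S| <= n)); first by rewrite cards0.
move=> i S n _ IH; apply: leq_trans (leq_card_setU _ _) _; exact: leq_add.
Qed.

Section Restr.
Variables (U R : finType) (A : authR U R) (tt : nat).

Definition restr (S : {set U}) : authR U R := [set p in A | p.1 \in S].

Lemma usersOf_restr S r : usersOf (restr S) r = usersOf A r :&: S.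
Proof. by apply/setP=> u; rewrite !inE. Qed.

Definition P1 (S : {set U}) := forall r, minn #|usersOf A r| tt <= #|usersOf A r :&: S|.
Definition P2 (S : {set U}) := forall r r', usersOf A r :&: usersOf A r' != set0 ->
   (usersOf A r :&: S) :&: (usersOf A r' :&: S) != set0.
Definition P3 (S : {set U}) := forall r r', usersOf A r != usersOf A r' ->
   usersOf A r :&: S != usersOf A r' :&: S.

Lemma wc_restr S c : valid_constr c -> lb_threshold c <= tt -> P1 S -> P2 S -> P3 S ->
  wc c (restr S) <= wc c A.
Proof.
move=> Hv Hlb H1 H2 H3.
case: c Hv Hlb => [r t f|r t f|r r' f|r r' f|r r' l|r r' l] /=;
  rewrite ?/maxdiff !usersOf_restr.
- move=> [fm _] _; apply: fm.
  have := subset_leq_card (subsetIl (usersOf A r) S); lia.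
- move=> [fm f0] ht; have h1 := H1 r.
  have h2 := subset_leq_card (subsetIl (usersOf A r) S).
  case: (leqP t #|usersOf A r :&: S|) => h.
  + have -> : f (Posz t - Posz #|usersOf A r :&: S|)%R = 0 by apply/f0; lia.
    done.
  + apply: fm; lia.
- move=> [fm _] _; apply: fm; rewrite lez_nat; apply: subset_leq_card.
  by apply: setISS; apply: subsetIl.
- move=> [fm _] _; apply: fm; rewrite lez_nat geq_max !leq_max.
  apply/andP; split; apply/orP; [left|right]; apply: subset_leq_card;
    apply/subsetP=> u; rewrite !inE; case: (u \in S); rewrite ?andbT ?andbF //.
- move=> _ _.
  case: (eqVneq (usersOf A r :&: S) (usersOf A r' :&: S)) => E //=.
  case: (eqVneq (usersOf A r) (usersOf A r')) => E' //=.
  by move: (H3 r r' E'); rewrite E eqxx.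
- move=> _ _.
  case: (eqVneq ((usersOf A r :&: S) :&: (usersOf A r' :&: S)) set0) => E //=.
  case: (eqVneq (usersOf A r :&: usersOf A r') set0) => E' //=.
  by move: (H2 r r' E'); rewrite E eqxx.
Qed.

Lemma wC_restr S C : (forall c, Stdlib.Lists.List.In c C -> valid_constr c) ->
  tau C <= tt -> P1 S -> P2 S -> P3 S -> wC C (restr S) <= wC C A.
Proof.
move=> + + H1 H2 H3; elim: C => [|c C IH] Hv Ht; first by rewrite /wC !big_nil.
move: Ht; rewrite /tau /wC !big_cons geq_max => /andP [Hc Ht].
apply: leq_add; first by apply: wc_restr => //; apply: Hv; left.
by apply: IH => // c' Hc'; apply: Hv; right.
Qed.

End Restr.

Section Constr.
Variables (U R : finType) (A : authR U R) (tt : nat).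
Hypothesis HA : complete A.
Hypothesis Htt : 1 <= tt.

Definition T (r : R) : {set U} := [set u in take tt (enum (usersOf A r))].

Lemma T_sub r : T r \subset usersOf A r.
Proof. by apply/subsetP=> u; rewrite inE => /mem_take; rewrite mem_enum. Qed.

Lemma T_card r : #|T r| = minn tt #|usersOf A r|.
Proof.
rewrite cardsE; move/card_uniqP: (take_uniq tt (enum_uniq (mem (usersOf A r)))) => ->.
by rewrite size_take_min cardE.
Qed.

Lemma T_ne r : exists u, u \in T r.
Proof.
apply/set0Pn; rewrite -card_gt0 T_card.
have := HA r; rewrite -card_gt0 => h; lia.
Qed.

Lemma P1_of (S : {set U}) : (forall r, T r \subset S) -> P1 A tt S.
Proof.
move=> HS r; rewrite minnC -T_card; apply: subset_leq_card.
by rewrite subsetI T_sub HS.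
Qed.

Lemma P2_diag (S : {set U}) : (forall r, T r \subset S) -> forall r,
  (usersOf A r :&: S) :&: (usersOf A r :&: S) != set0.
Proof.
move=> HS r; rewrite setIid; have [u Hu] := T_ne r; apply/set0Pn; exists u.
by rewrite inE (subsetP (T_sub r)) // (subsetP (HS r)).
Qed.

Definition bset (X : {set R}) : {set U} :=
  if [pick u | [forall r in X, u \in usersOf A r]] is Some u then [set u] else set0.
Definition dset (X : {set R}) : {set U} :=
  if [pick u | [exists r in X, exists r' in X, (u \in usersOf A r) != (u \in usersOf A r')]]
  is Some u then [set u] else set0.

Lemma bset_card X : #|bset X| <= 1.
Proof. by rewrite /bset; case: pickP => [u _|_]; rewrite ?cards1 ?cards0. Qed.
Lemma dset_card X : #|dset X| <= 1.
Proof. by rewrite /dset; case: pickP => [u _|_]; rewrite ?cards1 ?cards0. Qed.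

Lemma bsetP (X : {set R}) u : (forall r, r \in X -> u \in usersOf A r) ->
  exists2 v, v \in bset X & forall r, r \in X -> v \in usersOf A r.
Proof.
move=> Hu; rewrite /bset; case: pickP => [v Hv|H].
  by exists v; rewrite ?set11 //; move=> r Hr; move/forall_inP: Hv; apply.
by move: (H u) => /forall_inP; case; exact: Hu.
Qed.

Lemma diff_ex r r' : usersOf A r != usersOf A r' ->
  exists u, (u \in usersOf A r) != (u \in usersOf A r').
Proof.
move=> H; case: (pickP (fun u => (u \in usersOf A r) != (u \in usersOf A r'))) => [u Hu|H0].
  by exists u.
exfalso; move/eqP: H; apply; apply/setP=> u; move: (H0 u) => /=.
by case: (u \in usersOf A r); case: (u \in usersOf A r').
Qed.

Lemma dP3 (S : {set U}) r r' : r != r' -> usersOf A r != usersOf A r' ->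
  dset [set r; r'] \subset S -> usersOf A r :&: S != usersOf A r' :&: S.
Proof.
move=> ne H HS; have [u Hu] := diff_ex H.
move: HS; rewrite /dset; case: pickP => [v Hv|H0]; last first.
  exfalso; move: (H0 u) => /negbT/negP; apply.
  by apply/exists_inP; exists r; rewrite ?set21 //; apply/exists_inP; exists r'; rewrite ?set22.
rewrite sub1set => vS.
have Hd : (v \in usersOf A r) != (v \in usersOf A r').
  move/exists_inP: Hv => [r1 H1 /exists_inP [r2 H2 Hd]].
  move: H1 H2 Hd; rewrite !in_set2 => /orP [] /eqP -> /orP [] /eqP -> //;
    by rewrite ?eqxx // eq_sym.
apply/eqP => E; move: Hd.
have : (v \in usersOf A r :&: S) = (v \in usersOf A r' :&: S) by rewrite E.
by rewrite !inE vS !andbT => ->; rewrite eqxx.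
Qed.

Definition pairs := [set X : {set R} | #|X| == 2].

Lemma in_pairs r r' : r != r' -> [set r; r'] \in pairs.
Proof. by move=> ne; rewrite inE cards2 ne. Qed.

Lemma sumT_le : \sum_(r : R) #|T r| <= #|R| * tt.
Proof.
apply: leq_trans (_ : \sum_(r : R) tt <= _).
  by apply: leq_sum => r _; rewrite T_card geq_minl.
by rewrite sum_nat_const.
Qed.

Lemma arith k c t : 2 <= k -> 1 <= t -> ~~ ((k == 2) && (t == 1)) ->
  k * k.-1 = 2 * c -> k * t + c * 2 <= 3 * t * c.
Proof.
move=> hk ht hn e.
case: (ltnP 2 k) => h3.
  have hc : k <= c by nia.
  nia.
have k2 : k = 2 by lia.
subst k; have c1 : c = 1 by lia.
subst c; move: hn; rewrite eqxx /=; lia.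
Qed.

Lemma exS : 2 <= #|R| -> exists S : {set U},
  [/\ #|S| <= 3 * tt * 'C(#|R|, 2), P1 A tt S, P2 A S & P3 A S].
Proof.
move=> hk.
have e2 : #|R| * #|R|.-1 = 2 * 'C(#|R|, 2).
  by rewrite -mul_bin_diag bin1.
case: (boolP ((#|R| == 2) && (tt == 1))) => [/andP [/eqP k2 /eqP t1] | hn]; last first.
  pose S := \bigcup_(r : R) T r :|: \bigcup_(X in pairs) (bset X :|: dset X).
  have TS : forall r, T r \subset S.
    by move=> r; apply: subsetU; apply/orP; left; apply: (bigcup_sup r).
  have XS : forall X, X \in pairs -> bset X :|: dset X \subset S.
    by move=> X HX; apply: subsetU; apply/orP; right; apply: (bigcup_sup X).
  exists S; split.
  - apply: leq_trans (leq_card_setU _ _) _.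
    have c1 := @card_bigcup_le R U predT T.
    have c2 := @card_bigcup_le _ U (mem pairs) (fun X => bset X :|: dset X).
    have h := leq_add c1 c2; apply: leq_trans h _.
    apply: (@leq_trans (#|R| * tt + #|pairs| * 2)); last first.
      by rewrite /pairs card_draws; exact: arith.
    apply: leq_add; first exact: sumT_le.
    rewrite -sum_nat_const; apply: leq_sum => X _.
    apply: leq_trans (leq_card_setU _ _) _.
    by have := bset_card X; have := dset_card X; lia.
  - exact: P1_of.
  - move=> r r' Hne; case: (eqVneq r r') => [<-|ne]; first exact: P2_diag.
    have [u] := set0Pn _ Hne; rewrite in_setI => /andP [u1 u2].
    have [v vb Hv] : exists2 v, v \in bset [set r; r'] &
        forall r0, r0 \in [set r; r'] -> v \in usersOf A r0.
      by apply: (bsetP (u := u)) => r0; rewrite in_set2 => /orP [] /eqP ->.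
    have vS : v \in S by apply: (subsetP (XS _ (in_pairs ne))); rewrite in_setU vb.
    apply/set0Pn; exists v.
    by rewrite !in_setI vS Hv ?set21 ?set22 // Hv ?set21 ?set22.
  - move=> r r' H; case: (eqVneq r r') => [E|ne]; first by rewrite E eqxx in H.
    apply: dP3 => //; apply: subset_trans (XS _ (in_pairs ne)); exact: subsetUr.
have setT_eq : forall r r', r != r' -> [set r; r'] = [set: R].
  move=> r r' ne; apply/eqP; rewrite eqEcard subsetT cardsT cards2 ne k2 //.
case: (pickP (fun u => [forall r in [set: R], u \in usersOf A r])) => [u0 Hu0 | Hno].
  have Hall : forall r, u0 \in usersOf A r.
    by move/forall_inP: Hu0 => h r; apply: h; rewrite inE.
  exists (u0 |: dset setT); split.
  - apply: leq_trans (leq_card_setU _ _) _; rewrite cards1 k2 t1.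
    by have := dset_card setT; have -> : 'C(2, 2) = 1 by []; lia.
  - move=> r; have : 0 < #|usersOf A r :&: (u0 |: dset setT)|.
      by rewrite card_gt0; apply/set0Pn; exists u0; rewrite in_setI Hall setU11.
    rewrite t1; lia.
  - move=> r r' _; apply/set0Pn; exists u0.
    by rewrite !in_setI !Hall setU11.
  - move=> r r' H; case: (eqVneq r r') => [E|ne]; first by rewrite E eqxx in H.
    apply: dP3 => //; rewrite setT_eq //; exact: subsetUr.
have noall : forall u r r', r != r' -> u \in usersOf A r -> u \in usersOf A r' -> False.
  move=> u r r' ne h1 h2; move: (Hno u) => /negbT/negP; apply.
  apply/forall_inP => r0 _; have : r0 \in [set r; r'] by rewrite setT_eq.
  by rewrite in_set2 => /orP [] /eqP ->.
have TS : forall r, T r \subset \bigcup_(r : R) T r by move=> r; apply: (bigcup_sup r).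
exists (\bigcup_(r : R) T r); split.
- have c1 := @card_bigcup_le R U predT T.
  apply: leq_trans c1 _; apply: leq_trans sumT_le _.
  by rewrite k2 t1.
- exact: P1_of.
- move=> r r' Hne; case: (eqVneq r r') => [<-|ne]; first exact: P2_diag.
  have [u] := set0Pn _ Hne; rewrite in_setI => /andP [u1 u2].
  by case: (noall u r r').
- move=> r r' H; case: (eqVneq r r') => [E|ne]; first by rewrite E eqxx in H.
  have [u Hu] := T_ne r.
  have u1 : u \in usersOf A r by apply: (subsetP (T_sub r)).
  have uS : u \in \bigcup_(r : R) T r by apply: (subsetP (TS r)).
  apply/eqP => E.
  have : u \in usersOf A r' :&: \bigcup_(r : R) T r by rewrite -E in_setI u1 uS.
  rewrite in_setI => /andP [u2 _]; exact: (noall u r r').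
Qed.

End Constr.

Theorem lemma4p6 (U R : finType) (C : seq (constr R))
    (omega : U -> {set R} -> nat) :
  monotone_omega omega ->
  valid_constrs C ->
  2 <= #|R| -> 1 <= tau C ->
  wbounded U C (3 * tau C * #|R| * 'C(#|R|, 2)) /\
  (forall A : authR U R, complete A ->
     exists Astar : authR U R,
       [/\ Astar \subset A, complete Astar,
           nusers Astar <= 3 * tau C * 'C(#|R|, 2) &
           wC C Astar <= wC C A]).
Proof.
move=> _ Hv hk ht.
have good : forall (A : authR U R) (S : {set U}), complete A -> P1 A (tau C) S -> P2 A S -> P3 A S ->
  [/\ restr A S \subset A, complete (restr A S), nusers (restr A S) <= #|S| &
      wC C (restr A S) <= wC C A].
  move=> A S HA H1 H2 H3; split.
  - by apply/subsetP => p; rewrite inE => /andP [].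
  - move=> r; rewrite usersOf_restr; have := H2 r r; rewrite !setIid; apply; exact: HA.
  - apply: subset_leq_card; apply/subsetP => u; rewrite inE => /set0Pn [r].
    by rewrite !inE => /andP [_ ->].
  - exact: (wC_restr Hv (leqnn _) H1 H2 H3).
split.
- move=> A HA Hlt.
  have [S [HS H1 H2 H3]] := exS HA ht hk.
  have [G1 G2 _ G4] := good A S HA H1 H2 H3.
  exists (restr A S); split => //.
  have sub : restr A S \subset setX S [set: R].
    apply/subsetP => -[u r]; rewrite !inE /= => /andP [_ ->]; done.
  have := subset_leq_card sub; rewrite cardsX cardsT => h.
  have h2 : #|S| * #|R| <= 3 * tau C * 'C(#|R|, 2) * #|R| by rewrite leq_mul2r HS orbT.
  lia.
- move=> A HA.
  have [S [HS H1 H2 H3]] := exS HA ht hk.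
  have [G1 G2 G3 G4] := good A S HA H1 H2 H3.
  exists (restr A S); split => //; exact: leq_trans G3 HS.
Qed.
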